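(* Let $\psi$ be a smooth even function on $\mathbb{R}$ with $\psi(\lambda)=1$ for $-1\le\lambda\le1$ and $\operatorname{supp}\psi\subset[-2,2]$. Then there is a constant $C$ depending only on $\psi$ such that for all $t\ge1$ and all real $a$, \[ \sup_{L\ge1}\Bigl|\int_0^\infty e^{it\lambda}\sin(a\sqrt\lambda)\,\psi\Bigl(\frac{\sqrt\lambda}{L}\Bigr)\,d\lambda\Bigr|\le C\,t^{-3/2}|a| . \] *)

(* Defs.v *)
From Stdlib Require Import Reals.
From Coquelicot Require Import Coquelicot.
Open Scope R_scope.

Definition smooth (psi : R -> R) : Prop := forall (n : nat) (x : R), ex_derive_n psi n x.

(* supp psi  ⊂ [-2,2]: since [-2,2] is closed, this says psi vanishes outside [-2,2]. *)
Definition supp_in_m2_2 (psi : R -> R) : Prop := forall x, 2 < Rabs x -> psi x = 0.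

Definition cexpi (s : R) : Complex.C := (cos s, sin s).

Definition integrand (psi : R -> R) (t a L : R) (lam : R) : Complex.C :=
  Complex.Cmult (cexpi (t * lam)) (Complex.RtoC (sin (a * sqrt lam) * psi (sqrt lam / L))).

Definition I_psi (psi : R -> R) (t a L : R) : Complex.C :=
  @RInt_gen C_R_CompleteNormedModule (integrand psi t a L) (at_point 0) (Rbar_locally p_infty).

(* Main.v *)
Require Import Defs.
From Stdlib Require Import Reals Lra.
From Coquelicot Require Import Coquelicot.
Open Scope R_scope.

Lemma cont_of_derive f x l : is_derive f x l -> @continuous R_UniformSpace R_UniformSpace f x.
Proof. intro H; apply (@ex_derive_continuous R_AbsRing R_NormedModule); eexists; eauto. Qed.

Lemma exR (f : R -> R) a b : (forall z, Rmin a b <= z <= Rmax a b -> continuous f z) -> ex_RInt f a b.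
Proof. exact (@ex_RInt_continuous R_CompleteNormedModule f a b). Qed.

Lemma RIu (f : R -> R) a b l : is_RInt f a b l -> RInt f a b = l.
Proof. exact (@is_RInt_unique R_CompleteNormedModule f a b l). Qed.
Lemma RIc (f : R -> R) a b : ex_RInt f a b -> is_RInt f a b (RInt f a b).
Proof. exact (@RInt_correct R_CompleteNormedModule f a b). Qed.

Lemma RIext (f g : R -> R) a b : (forall x, Rmin a b < x < Rmax a b -> f x = g x) -> RInt f a b = RInt g a b.
Proof. exact (@RInt_ext R_CompleteNormedModule f g a b). Qed.

Lemma sin_abs_le x : Rabs (sin x) <= Rabs x.
Proof.
  assert (H : forall y, 0 <= y -> Rabs (sin y) <= y).
  { intros y Hy.
    assert (Hi := is_RInt_derive sin cos 0 y (fun x _ => is_derive_sin x) (fun x _ => ex_derive_continuous cos x (ex_intro _ _ (is_derive_cos x)))).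
    apply RIu in Hi.
    rewrite sin_0 in Hi. unfold minus, plus, opp in Hi; simpl in Hi.
    replace (sin y) with (RInt cos 0 y) by lra.
    eapply Rle_trans. apply abs_RInt_le_const with (M := 1). lra.
    apply exR; intros; eapply cont_of_derive; apply is_derive_cos.
    intros; apply Rabs_le; apply COS_bound. lra. }
  destruct (Rle_dec 0 x).
  - rewrite (Rabs_pos_eq x r); auto.
  - rewrite (Rabs_left x) by lra. assert (Hs := H (-x) ltac:(lra)). rewrite sin_neg, Rabs_Ropp in Hs. exact Hs.
Qed.


Lemma ibp f df g dg a b : a <= b ->
  (forall x, a <= x <= b -> is_derive f x (df x)) ->
  (forall x, a <= x <= b -> is_derive g x (dg x)) ->
  (forall x, a <= x <= b -> continuous df x) ->
  (forall x, a <= x <= b -> continuous dg x) ->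
  RInt (fun x => df x * g x) a b = f b * g b - f a * g a - RInt (fun x => f x * dg x) a b.
Proof.
  intros Hab Hf Hg Hdf Hdg.
  assert (E : forall x, Rmin a b <= x <= Rmax a b -> a <= x <= b).
  { intros x; rewrite Rmin_left, Rmax_right; auto. }
  assert (C1 : forall x, Rmin a b <= x <= Rmax a b -> continuous (fun x => df x * g x) x).
  { intros x Hx; apply E in Hx. apply (continuous_mult df g). auto. eapply cont_of_derive; eauto. }
  assert (C2 : forall x, Rmin a b <= x <= Rmax a b -> continuous (fun x => f x * dg x) x).
  { intros x Hx; apply E in Hx. apply (continuous_mult f dg). eapply cont_of_derive; eauto. auto. }
  assert (H : is_RInt (fun x => df x * g x + f x * dg x) a b (minus (f b * g b) (f a * g a))).
  { apply (@is_RInt_derive R_CompleteNormedModule (fun x => f x * g x)).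
  - intros x Hx; apply E in Hx. exact (is_derive_mult f g x (df x) (dg x) (Hf x Hx) (Hg x Hx) Rmult_comm).
  - intros x Hx. apply (continuous_plus (fun x => df x * g x) (fun x => f x * dg x)); auto. }
  apply RIu in H.
  rewrite (RInt_plus (V:=R_CompleteNormedModule) (fun x => df x * g x) (fun x => f x * dg x)) in H
      by (apply exR; auto).
  unfold minus, plus, opp in H; simpl in H. lra.
Qed.

Ltac neq := repeat split; try (intro; nra).

Lemma cont_ex f x : ex_derive f x -> @continuous R_UniformSpace R_UniformSpace f x.
Proof. intro H; apply (@ex_derive_continuous R_AbsRing R_NormedModule); auto. Qed.

Lemma fres_01 θ y : 0 <= y -> y <= 1 -> Rabs (RInt (fun u => sin (u*u+θ)) 0 y) <= 1.
Proof.
  intros H0 H1.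
  eapply Rle_trans. apply abs_RInt_le_const with (M := 1). lra.
  apply exR; intros; apply cont_ex; auto_derive; auto.
  intros; apply Rabs_le; apply SIN_bound. nra.
Qed.

Lemma fres_1y θ y : 1 <= y -> Rabs (RInt (fun u => sin (u*u+θ)) 1 y) <= 3/2.
Proof.
  intros Hy.
  set (f := fun u => - cos (u*u+θ)).
  set (df := fun u => sin (u*u+θ) * (2*u)).
  set (gg := fun u : R => / (2*u)).
  set (dgg := fun u : R => - / (2*u*u)).
  assert (E : RInt (fun u => sin (u*u+θ)) 1 y = RInt (fun u => df u * gg u) 1 y).
  { apply RIext. intros x Hx. rewrite Rmin_left, Rmax_right in Hx by lra.
    unfold df, gg. field. lra. }
  rewrite E, (ibp f df gg dgg); cycle 1. lra.
  all: try (intros x Hx; unfold f, df; cbv beta; auto_derive; [auto| ring]; fail).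
  { intros x Hx; unfold gg, dgg; cbv beta; auto_derive; [intro; lra| field; intro; lra]. }
  { intros x Hx; unfold df; apply cont_ex; auto_derive; auto. }
  { intros x Hx; unfold dgg; apply cont_ex; auto_derive; neq. }
  assert (Hh : is_RInt (fun u => / (2*u*u)) 1 y (minus (- / (2*y)) (- / (2*1)))).
  { apply (@is_RInt_derive R_CompleteNormedModule (fun u => - / (2*u))).
    - intros x Hx; rewrite Rmin_left, Rmax_right in Hx by lra. auto_derive. neq. field. neq.
    - intros x Hx; rewrite Rmin_left, Rmax_right in Hx by lra. apply cont_ex; auto_derive; neq. }
  assert (Hh' : is_RInt (fun u => - / (2*u*u)) 1 y (minus (/ (2*y)) (/ (2*1)))).
  { apply (@is_RInt_derive R_CompleteNormedModule (fun u => / (2*u))).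
    - intros x Hx; rewrite Rmin_left, Rmax_right in Hx by lra. auto_derive. neq. field. neq.
    - intros x Hx; rewrite Rmin_left, Rmax_right in Hx by lra. apply cont_ex; auto_derive; neq. }
  assert (Ex : ex_RInt (fun x => f x * dgg x) 1 y).
  { apply exR; intros x Hx; rewrite Rmin_left, Rmax_right in Hx by lra.
    unfold f, dgg; apply cont_ex; auto_derive; neq. }
  assert (B1 : RInt (fun x => f x * dgg x) 1 y <= RInt (fun u => / (2*u*u)) 1 y).
  { apply RInt_le; [lra | exact Ex | eexists; exact Hh | ].
    intros x Hx. unfold f, dgg.
    assert (0 < / (2*x*x)) by (apply Rinv_0_lt_compat; nra).
    generalize (COS_bound (x*x+θ)); nra. }
  assert (B2 : RInt (fun u => - / (2*u*u)) 1 y <= RInt (fun x => f x * dgg x) 1 y).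
  { apply RInt_le; [lra | eexists; exact Hh' | exact Ex | ].
    intros x Hx. unfold f, dgg.
    assert (0 < / (2*x*x)) by (apply Rinv_0_lt_compat; nra).
    generalize (COS_bound (x*x+θ)); nra. }
  rewrite (RIu _ _ _ _ Hh) in B1. rewrite (RIu _ _ _ _ Hh') in B2.
  unfold minus, plus, opp in B1, B2; simpl in B1, B2.
  assert (0 < / (2*y) <= /2).
  { split. apply Rinv_0_lt_compat; lra. apply Rinv_le_contravar; lra. }
  set (J := RInt (fun x => f x * dgg x) 1 y) in *.
  unfold f, gg.
  generalize (COS_bound (y*y+θ)) (COS_bound (1*1+θ)). intros.
  replace (/ (2*1)) with (/2) in * by (f_equal; ring).
  apply Rabs_le. split; nra.
Qed.

Lemma RIch (f : R -> R) a b c : ex_RInt f a b -> ex_RInt f b c -> RInt f a b + RInt f b c = RInt f a c.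
Proof. exact (@RInt_Chasles R_CompleteNormedModule f a b c). Qed.

Lemma exg θ a b : ex_RInt (fun u => sin (u*u+θ)) a b.
Proof. apply exR; intros; apply cont_ex; auto_derive; auto. Qed.

Lemma fres_pos θ y : 0 <= y -> Rabs (RInt (fun u => sin (u*u+θ)) 0 y) <= 5/2.
Proof.
  intros Hy. destruct (Rle_dec y 1).
  - eapply Rle_trans. apply fres_01; lra. lra.
  - rewrite <- (RIch _ 0 1 y) by apply exg.
    eapply Rle_trans. apply Rabs_triang.
    generalize (fres_01 θ 1 ltac:(lra) ltac:(lra)) (fres_1y θ y ltac:(lra)). lra.
Qed.

Lemma fres_any θ y : Rabs (RInt (fun u => sin (u*u+θ)) 0 y) <= 5/2.
Proof.
  destruct (Rle_dec 0 y). now apply fres_pos.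
  assert (H := RInt_comp_lin (V := R_CompleteNormedModule) (fun u => sin (u*u+θ)) (-1) 0 0 (-y) (exg _ _ _)).
  replace (-1 * 0 + 0) with 0 in H by ring. replace (-1 * - y + 0) with y in H by ring.
  rewrite <- H.
  rewrite (RIext _ (fun x => scal (-1) (sin (x*x+θ)))).
  rewrite (RInt_scal (V := R_CompleteNormedModule)) by apply exg.
  unfold scal; simpl; unfold mult; simpl. rewrite Rabs_mult. replace (Rabs (-1)) with 1 by (rewrite Rabs_left by lra; ring). rewrite Rmult_1_l.
  apply fres_pos; lra.
  intros x _. unfold scal; simpl; unfold mult; simpl. f_equal. f_equal. ring.
Qed.

Lemma fres_all θ p q : Rabs (RInt (fun u => sin (u*u+θ)) p q) <= 5.
Proof.
  assert (H := RIch (fun u => sin (u*u+θ)) 0 p q (exg _ _ _) (exg _ _ _)).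
  replace (RInt (fun u => sin (u*u+θ)) p q) with
    (RInt (fun u => sin (u*u+θ)) 0 q - RInt (fun u => sin (u*u+θ)) 0 p) by lra.
  eapply Rle_trans. apply Rabs_triang. rewrite Rabs_Ropp.
  generalize (fres_any θ q) (fres_any θ p). lra.
Qed.

Lemma exS t b θ a c : ex_RInt (fun s => sin (t*s*s + b*s + θ)) a c.
Proof. apply exR; intros; apply cont_ex; auto_derive; auto. Qed.

Lemma Fbound t b θ x : 0 < t -> Rabs (RInt (fun s => sin (t*s*s + b*s + θ)) 0 x) <= 5 / sqrt t.
Proof.
  intros Ht.
  set (r := sqrt t). assert (Hr : 0 < r) by (apply sqrt_lt_R0; auto).
  assert (Hrr : r * r = t) by (apply sqrt_sqrt; lra).
  set (c := b / (2*t)). set (θ' := θ - b*b/(4*t)).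
  assert (H := RInt_comp_lin (V := R_CompleteNormedModule) (fun u => sin (u*u+θ')) r (r*c) 0 x (exg _ _ _)).
  rewrite (RIext _ (fun s => scal r (sin (t*s*s + b*s + θ)))) in H.
  rewrite (RInt_scal (V := R_CompleteNormedModule)) in H by apply exS.
  unfold scal in H; simpl in H; unfold mult in H; simpl in H.
  assert (B := fres_all θ' (r * 0 + r * c) (r * x + r * c)).
  rewrite <- H, Rabs_mult, (Rabs_pos_eq r) in B by lra.
  apply (Rmult_le_reg_l r); auto. unfold Rdiv. fold r. field_simplify; lra.
  intros y _. unfold scal; simpl; unfold mult; simpl. f_equal. f_equal.
  replace ((r * y + r * c) * (r * y + r * c)) with ((r*r) * ((y+c)*(y+c))) by ring.
  rewrite Hrr. unfold θ', c. field. lra.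
Qed.

Lemma VC t b θ R A dA B : 0 < t -> 0 <= R ->
  (forall x, is_derive A x (dA x)) -> (forall x, continuous dA x) -> A R = 0 ->
  (forall x, 0 <= x <= R -> Rabs (dA x) <= B) ->
  Rabs (RInt (fun s => sin (t*s*s+b*s+θ) * A s) 0 R) <= 5 / sqrt t * B * R.
Proof.
  intros Ht HR HA HdA HAR HB.
  set (φ := fun s => sin (t*s*s+b*s+θ)).
  set (F := fun x => RInt φ 0 x).
  assert (HF : forall x, is_derive F x (φ x)).
  { intros x. apply (is_derive_RInt (V := R_NormedModule) φ F 0 x).
    apply filter_forall; intros; apply RIc; apply exS.
    unfold φ; apply cont_ex; auto_derive; auto. }
  assert (Hc : forall x, continuous φ x).
  { intros x; unfold φ; apply cont_ex; auto_derive; auto. }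
  change (fun s => sin (t*s*s+b*s+θ) * A s) with (fun s => φ s * A s).
  rewrite (ibp F φ A dA 0 R); auto.
  assert (F0 : F 0 = 0) by (unfold F; apply (RInt_point (V := R_CompleteNormedModule))).
  rewrite F0, HAR.
  assert (HB0 : 0 <= B) by (eapply Rle_trans; [apply Rabs_pos | apply (HB 0); lra]).
  replace (F R * 0 - 0 * A 0 - RInt (fun x => F x * dA x) 0 R) with (- RInt (fun x => F x * dA x) 0 R) by ring.
  rewrite Rabs_Ropp.
  eapply Rle_trans. apply abs_RInt_le_const with (M := 5 / sqrt t * B). auto.
  apply exR; intros; apply (continuous_mult F dA); auto. eapply cont_of_derive; eauto.
  intros x Hx. rewrite Rabs_mult. apply Rmult_le_compat; try apply Rabs_pos.
  apply Fbound; auto. auto.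
  lra.
Qed.

Lemma RIplus (f g : R -> R) a b : ex_RInt f a b -> ex_RInt g a b ->
  RInt (fun x => f x + g x) a b = RInt f a b + RInt g a b.
Proof. exact (@RInt_plus R_CompleteNormedModule f g a b). Qed.
Lemma RIscal (f : R -> R) a b l : ex_RInt f a b -> RInt (fun x => l * f x) a b = l * RInt f a b.
Proof. exact (@RInt_scal R_CompleteNormedModule f a b l). Qed.

Lemma sinPI2 u : sin (u + PI/2) = cos u.
Proof. rewrite sin_plus, sin_PI2, cos_PI2. ring. Qed.

Lemma decomp t θ a s p q :
  cos (t*s*s+θ) * (a * cos (a*s) * p + sin (a*s) * q) =
  a/2 * (sin (t*s*s + a*s + (θ+PI/2)) * p) + a/2 * (sin (t*s*s + -a*s + (θ+PI/2)) * p)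
  + sin (t*s*s + 0*s + (θ+PI/2)) * (sin (a*s) * q).
Proof.
  replace (t*s*s + a*s + (θ+PI/2)) with ((t*s*s+θ) + a*s + PI/2) by ring.
  replace (t*s*s + -a*s + (θ+PI/2)) with ((t*s*s+θ) - a*s + PI/2) by ring.
  replace (t*s*s + 0*s + (θ+PI/2)) with ((t*s*s+θ) + PI/2) by ring.
  rewrite !sinPI2, (cos_plus (t*s*s+θ) (a*s)), (cos_minus (t*s*s+θ) (a*s)). field.
Qed.

Lemma part34 (psi p1 p2 : R -> R) t θ a L D1 D2 : 0 < t -> 1 <= L ->
  (forall x, is_derive psi x (p1 x)) -> (forall x, is_derive p1 x (p2 x)) ->
  (forall x, ex_derive p2 x) -> psi 3 = 0 -> p1 3 = 0 ->
  (forall x, 0 <= x <= 3 -> Rabs (p1 x) <= D1) ->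
  (forall x, 0 <= x <= 3 -> Rabs (p2 x) <= D2) ->
  Rabs (RInt (fun s => cos (t*s*s+θ) * (a*cos(a*s)*psi(s/L) + sin(a*s)*(p1(s/L)/L))) 0 (3*L))
   <= Rabs a * (30*D1+45*D2) / sqrt t.
Proof.
  intros Ht HL H0 H1 H2 Z0 Z1 HD1 HD2.
  assert (DP0 : forall y, Derive psi y = p1 y) by (intros; apply is_derive_unique; auto).
  assert (DP1 : forall y, Derive p1 y = p2 y) by (intros; apply is_derive_unique; auto).
  assert (E0 : forall y, ex_derive psi y) by (intros; eexists; eauto).
  assert (E1 : forall y, ex_derive p1 y) by (intros; eexists; eauto).
  assert (HL0 : 0 < L) by lra.
  assert (Hst : 0 < sqrt t) by (apply sqrt_lt_R0; auto).
  set (Sf := fun b θ' s => sin (t*s*s + b*s + θ')).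
  set (A1 := fun s => psi (s/L)).
  set (A2 := fun s => sin (a*s) * (p1 (s/L) / L)).
  rewrite (RIext _ (fun s => (a/2 * (Sf a (θ+PI/2) s * A1 s) + a/2 * (Sf (-a) (θ+PI/2) s * A1 s))
                          + Sf 0 (θ+PI/2) s * A2 s)).
  2:{ intros x _. unfold Sf, A1, A2. apply decomp. }
  assert (ES : forall b θ', ex_RInt (fun s => Sf b θ' s * A1 s) 0 (3*L)).
  { intros; apply exR; intros; unfold Sf, A1; apply cont_ex; auto_derive; auto. }
  assert (ES2 : forall b θ', ex_RInt (fun s => Sf b θ' s * A2 s) 0 (3*L)).
  { intros; apply exR; intros; unfold Sf, A2; apply cont_ex; auto_derive; auto. }
  rewrite RIplus, RIplus, RIscal, RIscal; auto.
  2,3: apply exR; intros; unfold Sf, A1, A2; apply cont_ex; auto_derive; auto.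
  assert (V1 : forall b, Rabs (RInt (fun s => Sf b (θ+PI/2) s * A1 s) 0 (3*L)) <= 15 * D1 / sqrt t).
  { intros b.
    replace (15 * D1 / sqrt t) with (5 / sqrt t * (D1 / L) * (3*L)) by (field; lra).
    apply (VC t b (θ+PI/2) (3*L) A1 (fun s => p1 (s/L) / L)); auto; try lra.
    - intros x; unfold A1; auto_derive; auto. rewrite DP0. unfold Rdiv; ring.
    - intros x; apply cont_ex; auto_derive; auto.
    - unfold A1. replace (3*L/L) with 3 by (field; lra). auto.
    - intros x Hx. unfold Rdiv. rewrite Rabs_mult, (Rabs_pos_eq (/L)).
      apply Rmult_le_compat_r. apply Rlt_le, Rinv_0_lt_compat; lra.
      apply HD1. split. apply Rmult_le_pos; try lra. apply Rlt_le, Rinv_0_lt_compat; lra.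
      apply (Rmult_le_reg_r L); auto. rewrite Rmult_assoc, Rinv_l; lra.
      apply Rlt_le, Rinv_0_lt_compat; lra. }
  assert (V2 : Rabs (RInt (fun s => Sf 0 (θ+PI/2) s * A2 s) 0 (3*L)) <= 15 * (Rabs a * (D1 + 3*D2)) / sqrt t).
  { replace (15 * (Rabs a * (D1 + 3*D2)) / sqrt t) with (5 / sqrt t * (Rabs a * (D1 + 3*D2) / L) * (3*L)) by (field; lra).
    apply (VC t 0 (θ+PI/2) (3*L) A2 (fun s => a*cos(a*s)*(p1(s/L)/L) + sin(a*s)*(p2(s/L)/L/L))); auto; try lra.
    - intros x; unfold A2; auto_derive; auto. rewrite DP1. unfold Rdiv; ring.
    - intros x; apply cont_ex; auto_derive; auto.
    - unfold A2. replace (3*L/L) with 3 by (field; lra). rewrite Z1; unfold Rdiv; rewrite Rmult_0_l, Rmult_0_r; reflexivity.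
    - intros x Hx.
      assert (Hy : 0 <= x / L <= 3).
      { split. apply Rmult_le_pos; try lra. apply Rlt_le, Rinv_0_lt_compat; lra.
        apply (Rmult_le_reg_r L); auto. unfold Rdiv. rewrite Rmult_assoc, Rinv_l; lra. }
      assert (Hx' : x = (x / L) * L) by (field; lra).
      set (y := x / L) in *.
      assert (B1 := HD1 y Hy). assert (B2 := HD2 y Hy).
      assert (Bc := COS_bound (a*x)).
      assert (Bs : Rabs (sin (a*x)) <= Rabs a * (y*L)).
      { rewrite <- Hx'. eapply Rle_trans. apply sin_abs_le. rewrite Rabs_mult, (Rabs_pos_eq x) by lra. lra. }
      replace (a * cos (a * x) * (p1 y / L) + sin (a * x) * (p2 y / L / L))
        with ((a * cos (a * x) * p1 y + sin (a * x) * p2 y / L) * / L) by (field; lra).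
      unfold Rdiv. rewrite Rabs_mult, (Rabs_pos_eq (/L)) by (apply Rlt_le, Rinv_0_lt_compat; lra).
      apply Rmult_le_compat_r. apply Rlt_le, Rinv_0_lt_compat; lra.
      eapply Rle_trans. apply Rabs_triang.
      unfold Rdiv. rewrite !Rabs_mult, (Rabs_pos_eq (/L)) by (apply Rlt_le, Rinv_0_lt_compat; lra).
      assert (Hc : Rabs (cos (a*x)) <= 1) by (apply Rabs_le; auto).
      assert (HiL : L * / L = 1) by (field; lra).
      assert (0 < / L) by (apply Rinv_0_lt_compat; lra).
      generalize (Rabs_pos a) (Rabs_pos (cos (a*x))) (Rabs_pos (p1 y)) (Rabs_pos (sin (a*x))) (Rabs_pos (p2 y)).
      intros. 
      assert (Rabs (sin (a*x)) * Rabs (p2 y) * / L <= Rabs a * y * D2).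
      { apply Rle_trans with (Rabs a * (y * L) * D2 * / L).
        apply Rmult_le_compat_r; try lra. apply Rmult_le_compat; auto.
        replace (Rabs a * (y * L) * D2 * / L) with (Rabs a * y * D2 * (L * / L)) by ring. rewrite HiL; lra. }
      assert (Rabs a * Rabs (cos (a*x)) * Rabs (p1 y) <= Rabs a * D1).
      { replace (Rabs a * D1) with (Rabs a * 1 * D1) by ring.
        apply Rmult_le_compat; auto. apply Rmult_le_pos; auto. apply Rmult_le_compat_l; auto. }
      assert (Rabs a * y * D2 <= Rabs a * 3 * D2) by (apply Rmult_le_compat_r; [lra| apply Rmult_le_compat_l; lra]).
      lra. }
  assert (W1 := V1 a). assert (W2 := V1 (-a)).
  set (I1 := RInt (fun s => Sf a (θ + PI / 2) s * A1 s) 0 (3 * L)) in *.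
  set (I2 := RInt (fun s => Sf (-a) (θ + PI / 2) s * A1 s) 0 (3 * L)) in *.
  set (I3 := RInt (fun s => Sf 0 (θ + PI / 2) s * A2 s) 0 (3 * L)) in *.
  assert (Ha2 : Rabs (a/2) = Rabs a / 2).
  { unfold Rdiv. rewrite Rabs_mult, (Rabs_pos_eq (/2)) by lra. auto. }
  eapply Rle_trans. apply Rabs_triang. eapply Rle_trans. apply Rplus_le_compat_r. apply Rabs_triang.
  rewrite !Rabs_mult, Ha2.
  unfold Rdiv in *. set (u := / sqrt t) in *.
  generalize (Rabs_pos a). intros.
  assert (Rabs a * / 2 * Rabs I1 <= Rabs a * / 2 * (15 * D1 * u)) by (apply Rmult_le_compat_l; lra).
  assert (Rabs a * / 2 * Rabs I2 <= Rabs a * / 2 * (15 * D1 * u)) by (apply Rmult_le_compat_l; lra).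
  lra.
  apply exR; intros; unfold Sf, A1; apply cont_ex; auto_derive; auto.
Qed.

Lemma mainR (psi p1 p2 : R -> R) t θ a L D1 D2 : 0 < t -> 1 <= L ->
  (forall x, is_derive psi x (p1 x)) -> (forall x, is_derive p1 x (p2 x)) ->
  (forall x, ex_derive p2 x) -> psi 3 = 0 -> p1 3 = 0 ->
  (forall x, 0 <= x <= 3 -> Rabs (p1 x) <= D1) ->
  (forall x, 0 <= x <= 3 -> Rabs (p2 x) <= D2) ->
  Rabs (RInt (fun l => sin (t*l+θ) * (sin (a * sqrt l) * psi (sqrt l / L))) 0 (3*L*(3*L)))
   <= Rabs a * (30*D1+45*D2) / (t * sqrt t).
Proof.
  intros Ht HL H0 H1 H2 Z0 Z1 HD1 HD2.
  assert (DP0 : forall y, Derive psi y = p1 y) by (intros; apply is_derive_unique; auto).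
  assert (E0 : forall y, ex_derive psi y) by (intros; eexists; eauto).
  assert (E1 : forall y, ex_derive p1 y) by (intros; eexists; eauto).
  assert (HL0 : 0 < L) by lra.
  assert (Hst : 0 < sqrt t) by (apply sqrt_lt_R0; auto).
  set (K := fun u => sin (a * u) * psi (u / L)).
  set (f := fun l => sin (t*l+θ) * K (sqrt l)).
  change (fun l => sin (t*l+θ) * (sin (a * sqrt l) * psi (sqrt l / L))) with f.
  assert (CV : RInt (fun y => scal (2*y) (f (y*y))) 0 (3*L) = RInt f (0*0) (3*L*(3*L))).
  { apply (RInt_comp (V:=R_CompleteNormedModule) f (fun s => s*s) (fun s => 2*s) 0 (3*L)).
    - intros x Hx. rewrite Rmin_left, Rmax_right in Hx by lra.
      apply (continuous_mult (fun l => sin (t*l+θ)) (fun l => K (sqrt l))).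
      apply cont_ex; auto_derive; auto.
      apply (continuous_comp sqrt K).
      apply continuity_pt_filterlim. apply continuity_pt_sqrt. nra.
      unfold K; apply cont_ex; auto_derive; auto.
    - intros x Hx. split. auto_derive; auto. ring. apply cont_ex; auto_derive; auto. }
  replace (0*0) with 0 in CV by ring. rewrite <- CV; clear CV.
  set (h := fun s => sin (a*s) * psi (s/L)).
  set (h' := fun s => a*cos(a*s)*psi(s/L) + sin(a*s)*(p1(s/L)/L)).
  set (fF := fun s => - cos (t*s*s+θ) / t).
  set (dF := fun s => sin (t*s*s+θ) * (2*s)).
  rewrite (RIext _ (fun s => dF s * h s)).
  2:{ intros x Hx. rewrite Rmin_left, Rmax_right in Hx by lra.
      unfold scal; simpl; unfold mult; simpl. unfold f, K, dF, h.
      rewrite sqrt_square by lra. replace (t * (x*x) + θ) with (t*x*x+θ) by ring. ring. }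
  rewrite (ibp fF dF h h' 0 (3*L)); try lra.
  2:{ intros x Hx. unfold fF, dF. auto_derive; auto. field. lra. }
  2:{ intros x Hx. unfold h, h'. auto_derive; auto. rewrite DP0. unfold Rdiv; ring. }
  2:{ intros x Hx. unfold dF. apply cont_ex; auto_derive; auto. }
  2:{ intros x Hx. unfold h'. apply cont_ex; auto_derive; auto. }
  assert (Hh3 : h (3*L) = 0).
  { unfold h. replace (3*L/L) with 3 by (field; lra). rewrite Z0. ring. }
  assert (Hh0 : h 0 = 0).
  { unfold h. rewrite Rmult_0_r, sin_0. ring. }
  rewrite Hh3, Hh0.
  rewrite (RIext _ (fun x => (- / t) * (cos (t*x*x+θ) * h' x))).
  2:{ intros x _. unfold fF. field. lra. }
  rewrite RIscal.
  2:{ apply exR; intros; unfold h'; apply cont_ex; auto_derive; auto. }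
  assert (P := part34 psi p1 p2 t θ a L D1 D2 Ht HL H0 H1 H2 Z0 Z1 HD1 HD2).
  fold h' in P.
  replace (fF (3 * L) * 0 - fF 0 * 0 - - / t * RInt (fun x => cos (t * x * x + θ) * h' x) 0 (3 * L))
    with (/ t * RInt (fun x => cos (t * x * x + θ) * h' x) 0 (3 * L)) by ring.
  rewrite Rabs_mult, (Rabs_pos_eq (/t)) by (apply Rlt_le, Rinv_0_lt_compat; lra).
  replace (Rabs a * (30 * D1 + 45 * D2) / (t * sqrt t)) with (/t * (Rabs a * (30 * D1 + 45 * D2) / sqrt t)) by (field; lra).
  apply Rmult_le_compat_l. apply Rlt_le, Rinv_0_lt_compat; lra. exact P.
Qed.

Lemma cont_g (psi : R -> R) t θ a L l : (forall x, ex_derive psi x) -> 0 <= l ->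
  continuous (fun l => sin (t*l+θ) * (sin (a * sqrt l) * psi (sqrt l / L))) l.
Proof.
  intros E0 Hl.
  apply (continuous_mult (fun l => sin (t*l+θ)) (fun l => (fun u => sin (a * u) * psi (u / L)) (sqrt l))).
  apply cont_ex; auto_derive; auto.
  apply (continuous_comp sqrt (fun u => sin (a * u) * psi (u / L))).
  apply continuity_pt_filterlim. apply continuity_pt_sqrt. auto.
  apply cont_ex; auto_derive; auto.
Qed.

Lemma tail (psi : R -> R) t θ a L M y X : (forall x, ex_derive psi x) -> 1 <= L -> M = 3*L*(3*L) -> M < y ->
  (forall x, 2 < Rabs x -> psi x = 0) ->
  X = RInt (fun l => sin (t*l+θ) * (sin (a * sqrt l) * psi (sqrt l / L))) 0 M ->
  is_RInt (fun l => sin (t*l+θ) * (sin (a * sqrt l) * psi (sqrt l / L))) 0 y X.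
Proof.
  intros E0 HL HM HMy Hz HX.
  set (g := fun l => sin (t*l+θ) * (sin (a * sqrt l) * psi (sqrt l / L))) in *.
  assert (G1 : is_RInt g 0 M X).
  { rewrite HX. apply RIc. apply exR. intros z Hz'. rewrite Rmin_left, Rmax_right in Hz' by nra.
    apply cont_g; auto; lra. }
  assert (G2 : is_RInt g M y 0).
  { assert (Hc : is_RInt (fun _ => 0) M y ((y-M)*0)) by exact (is_RInt_const (V:=R_NormedModule) M y 0).
    rewrite Rmult_0_r in Hc.
    apply (is_RInt_ext (V := R_NormedModule) (fun _ => 0)); auto.
    intros x Hx. rewrite Rmin_left, Rmax_right in Hx by lra.
    assert (Hs : 3 * L <= sqrt x).
    { rewrite <- (sqrt_square (3*L)) by lra. apply sqrt_le_1_alt. nra. }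
    unfold g. rewrite Hz, !Rmult_0_r. reflexivity.
    rewrite Rabs_pos_eq.
    apply Rlt_le_trans with 3. lra. apply (Rmult_le_reg_r L). lra.
    unfold Rdiv. rewrite Rmult_assoc, Rinv_l; lra.
    apply Rmult_le_pos. lra. apply Rlt_le, Rinv_0_lt_compat; lra. }
  assert (HC := is_RInt_Chasles (V := R_NormedModule) g 0 M y X 0 G1 G2).
  unfold plus in HC; simpl in HC. rewrite Rplus_0_r in HC. exact HC.
Qed.

Theorem lemma2p4 (psi : R -> R) :
  smooth psi ->
  (forall x, psi (- x) = psi x) ->
  (forall x, -1 <= x <= 1 -> psi x = 1) ->
  supp_in_m2_2 psi ->
  exists C : R, forall t a : R, 1 <= t ->
    forall L : R, 1 <= L ->
      Complex.Cmod (I_psi psi t a L) <= C * Rpower t (-3/2) * Rabs a.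
Proof.
  intros Hs Hev Hone Hsupp.
  set (p1 := Derive psi). set (p2 := Derive p1).
  assert (E0 : forall x, ex_derive psi x) by (intro x; exact (Hs 1%nat x)).
  assert (E1 : forall x, ex_derive p1 x) by (intro x; exact (Hs 2%nat x)).
  assert (E2 : forall x, ex_derive p2 x) by (intro x; exact (Hs 3%nat x)).
  assert (D0 : forall x, is_derive psi x (p1 x)) by (intro; apply Derive_correct; auto).
  assert (D1' : forall x, is_derive p1 x (p2 x)) by (intro; apply Derive_correct; auto).
  assert (Z0 : psi 3 = 0) by (apply Hsupp; rewrite Rabs_pos_eq; lra).
  assert (Z1 : p1 3 = 0).
  { apply is_derive_unique. apply (is_derive_ext_loc (fun _ => 0)).
    exists (mkposreal 1 Rlt_0_1). intros y Hy. change (Rabs (y - 3) < 1) in Hy.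
    symmetry; apply Hsupp. apply Rabs_def2 in Hy. rewrite Rabs_pos_eq; lra.
    apply (is_derive_const (K := R_AbsRing) (V := R_NormedModule)). }
  assert (BD : forall q : R -> R, (forall x, ex_derive q x) -> exists D, forall x, 0 <= x <= 3 -> Rabs (q x) <= D).
  { intros q Hq. destruct (continuity_ab_maj (fun x => Rabs (q x)) 0 3) as [m [Hm _]]. lra.
    intros c _. apply continuity_pt_filterlim. apply continuous_Rabs_comp. apply cont_ex; auto.
    exists (Rabs (q m)); auto. }
  destruct (BD p1 E1) as [D1 HD1]. destruct (BD p2 E2) as [D2 HD2].
  exists (2 * (30*D1+45*D2)).
  intros t a Ht L HL.
  set (M := 3*L*(3*L)).
  set (X := RInt (fun l => sin (t*l+PI/2) * (sin (a*sqrt l) * psi (sqrt l / L))) 0 M).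
  set (Y := RInt (fun l => sin (t*l+0) * (sin (a*sqrt l) * psi (sqrt l / L))) 0 M).
  assert (HI : I_psi psi t a L = (X, Y)).
  { unfold I_psi. apply (@is_RInt_gen_unique C_R_CompleteNormedModule _ _
      (Proper_StrongProper _ (at_point_filter 0)) (Proper_StrongProper _ (Rbar_locally_filter p_infty))
      (integrand psi t a L) (X, Y)).
    intros P HP.
    apply Filter_prod with (fun x => x = 0) (fun y => M < y).
    - reflexivity.
    - exists M; auto.
    - intros x y -> Hy. exists (X, Y). split; [| apply locally_singleton; auto].
      simpl. apply (is_RInt_fct_extend_pair (U:=R_NormedModule) (V:=R_NormedModule)).
      + apply (is_RInt_ext (V:=R_NormedModule) (fun l => sin (t*l+PI/2) * (sin (a*sqrt l) * psi (sqrt l / L)))).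
        intros l _. unfold integrand, Cmult, cexpi, RtoC; simpl. rewrite sinPI2. ring.
        apply (tail psi t (PI/2) a L M y X); auto.
      + apply (is_RInt_ext (V:=R_NormedModule) (fun l => sin (t*l+0) * (sin (a*sqrt l) * psi (sqrt l / L)))).
        intros l _. unfold integrand, Cmult, cexpi, RtoC; simpl. rewrite Rplus_0_r. ring.
        apply (tail psi t 0 a L M y Y); auto. }
  rewrite HI.
  assert (BX : Rabs X <= Rabs a * (30*D1+45*D2) / (t * sqrt t)) by (apply (mainR psi p1 p2); auto; lra).
  assert (BY : Rabs Y <= Rabs a * (30*D1+45*D2) / (t * sqrt t)) by (apply (mainR psi p1 p2); auto; lra).
  assert (Hs2 : sqrt 2 <= 2).
  { rewrite <- (sqrt_square 2) at 2 by lra. apply sqrt_le_1_alt. lra. }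
  assert (HP : Rpower t (-3/2) = / (t * sqrt t)).
  { replace (-3/2) with (- (1 + /2)) by field.
    rewrite Rpower_Ropp, Rpower_plus, Rpower_1, Rpower_sqrt; auto; lra. }
  rewrite HP.
  eapply Rle_trans. apply Cmod_2Rmax. simpl.
  assert (Hm : Rmax (Rabs X) (Rabs Y) <= Rabs a * (30*D1+45*D2) / (t * sqrt t)) by (apply Rmax_lub; auto).
  assert (0 <= Rmax (Rabs X) (Rabs Y)) by (eapply Rle_trans; [apply Rabs_pos | apply Rmax_l]).
  eapply Rle_trans. apply Rmult_le_compat_r. auto. exact Hs2.
  replace (2 * (30 * D1 + 45 * D2) * / (t * sqrt t) * Rabs a) with (2 * (Rabs a * (30*D1+45*D2) / (t * sqrt t))) by (unfold Rdiv; ring).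
  apply Rmult_le_compat_l; lra.
Qed.
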